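(* Consider the two-unicast wireline network (''butterfly network with co-located sinks'') with nodes $\mathsf{S}_1,\mathsf{S}_2,\mathsf{M}_1,\mathsf{M}_2,\mathsf{D}$, where the single destination node $\mathsf{D}$ must decode both $W_1$ (from $\mathsf{S}_1$) and $W_2$ (from $\mathsf{S}_2$), and directed edges: edge 1 from $\mathsf{S}_1$ to $\mathsf{M}_1$, edge 2 from $\mathsf{S}_2$ to $\mathsf{M}_1$, edge 3 from $\mathsf{M}_1$ to $\mathsf{M}_2$, edge 4 from $\mathsf{S}_1$ to $\mathsf{D}$, edge 5 from $\mathsf{S}_2$ to $\mathsf{D}$, and one edge from $\mathsf{M}_2$ to $\mathsf{D}$ of capacity $\mathsf{C}_6+\mathsf{C}_7$, where edge $i$ has capacity $\mathsf{C}_i\ge0$ and $\mathsf{C}_6,\mathsf{C}_7\ge0$. Then every nonnegative rate pair $(R_1,R_2)$ satisfying $$R_1\le \mathsf{C}_1+\min\{R_1,\mathsf{C}_4\},\quad R_2\le \mathsf{C}_2+\min\{R_2,\mathsf{C}_5\},$$ $$R_1+R_2\le \min\{\mathsf{C}_3,\mathsf{C}_6+\mathsf{C}_7\}+\min\{R_2,\mathsf{C}_5\}+\min\{R_1,\mathsf{C}_4\}$$ is achievable (without security constraints).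
   Context: Network model: a directed acyclic graph; each edge $e$ is a noiseless orthogonal channel of capacity $\mathsf{C}_e$ carrying symbols over $\mathbb{F}_q$; over $n$ channel uses edge $e$ carries $X_e^n$, received as $Y_e^n=X_e^n$. Source $\mathsf{S}_i$ has message $W_i$ (uniform, $q$-ary entropy $nR_i$, $W_1,W_2$ independent). A rate pair is achievable if for some block length $n$ there are encoding functions—an edge leaving $\mathsf{S}_i$ carries a function of $W_i$, any other edge a function of the symbols received on the incoming edges of its tail—and decoding functions at $\mathsf{D}$ (functions of the symbols on its incoming edges) recovering both $W_1$ and $W_2$ with vanishing error probability. *)

(* Defs.v *)
From HB Require Import structures.
From mathcomp Require Import all_boot all_order all_algebra.
From mathcomp Require Import reals.
Set Implicit Arguments. Unset Strict Implicit. Unset Printing Implicit Defensive.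
Import Order.TTheory GRing.Theory Num.Theory.
Local Open Scope ring_scope.

(* Butterfly network with co-located sinks:
     edge 1 : S1 -> M1 (capacity C1)     edge 4 : S1 -> D (capacity C4)
     edge 2 : S2 -> M1 (capacity C2)     edge 5 : S2 -> D (capacity C5)
     edge 3 : M1 -> M2 (capacity C3)     edge 6 : M2 -> D (capacity C67)
   A block code of length n over the q-ary alphabet:
   - message W_i is uniform on 'I_(q ^ m_i) (q-ary entropy m_i);
   - edge e carries k_e q-ary symbols (an element of 'I_(q ^ k_e), i.e. of
     F_q^(k_e) up to a bijection) with k_e <= n * C_e (capacity constraint
     over n channel uses);
   - edges leaving S_i are functions of W_i, edge 3 is a function of what M1
     receives (edges 1,2), edge 6 is a function of what M2 receives (edge 3);
   - the decoder at D is a function of edges 4,5,6 and outputs (W1, W2).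
   The error probability (W1, W2 independent uniform) is the fraction of
   message pairs decoded incorrectly.
   (R1,R2) is achievable if for every eps > 0 there is a block length n and
   such a code with rates m_i / n >= R_i - eps and error probability <= eps. *)
Definition butterfly_achievable (R : realType) (q : nat)
    (C1 C2 C3 C4 C5 C67 R1 R2 : R) : Prop :=
  forall eps : R, 0 < eps ->
  exists n : nat, (0 < n)%N /\
  exists m1 m2 k1 k2 k3 k4 k5 k6 : nat,
    (n%:R * (R1 - eps) <= m1%:R /\ n%:R * (R2 - eps) <= m2%:R) /\
    [/\ k1%:R <= n%:R * C1, k2%:R <= n%:R * C2, k3%:R <= n%:R * C3,
        k4%:R <= n%:R * C4 & k5%:R <= n%:R * C5] /\ k6%:R <= n%:R * C67 /\
  exists (f1 : 'I_(q ^ m1) -> 'I_(q ^ k1)) (f4 : 'I_(q ^ m1) -> 'I_(q ^ k4))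
         (f2 : 'I_(q ^ m2) -> 'I_(q ^ k2)) (f5 : 'I_(q ^ m2) -> 'I_(q ^ k5))
         (f3 : 'I_(q ^ k1) -> 'I_(q ^ k2) -> 'I_(q ^ k3))
         (f6 : 'I_(q ^ k3) -> 'I_(q ^ k6))
         (g : 'I_(q ^ k4) -> 'I_(q ^ k5) -> 'I_(q ^ k6) ->
              'I_(q ^ m1) * 'I_(q ^ m2)),
    (#|[set w : 'I_(q ^ m1) * 'I_(q ^ m2) |
         g (f4 w.1) (f5 w.2) (f6 (f3 (f1 w.1) (f2 w.2))) != w]|%:R
      <= eps * (q ^ m1 * q ^ m2)%:R :> R).

(* Main.v *)
Require Import Defs.
From HB Require Import structures.
From mathcomp Require Import all_boot all_order all_algebra.
From mathcomp Require Import reals.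
From mathcomp Require Import lra.
Import Order.TTheory GRing.Theory Num.Theory.
Local Open Scope ring_scope.

Definition mk (N : nat) (H : (0 < N)%N) (x : nat) : 'I_N := Ordinal (ltn_pmod x H).

Lemma split_ok (q a b w : nat) : (0 < q)%N -> (w < q ^ (a + b))%N ->
  ((w %/ q ^ b) %% q ^ a * q ^ b + w %% q ^ b)%N = w.
Proof.
move=> q0 hw; rewrite modn_small; first by rewrite -divn_eq.
by rewrite ltn_divLR ?expn_gt0 ?q0 // -expnD.
Qed.

Lemma comb_lt (q a b x y : nat) : (x < q ^ a)%N -> (y < q ^ b)%N ->
  (x * q ^ b + y < q ^ (a + b))%N.
Proof.
move=> hx hy; rewrite expnD.
apply: (@leq_trans (x.+1 * q ^ b)).
  by rewrite mulSn addnC ltn_add2r.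
by rewrite leq_mul2r hx orbT.
Qed.

Lemma comb_div (q b x y : nat) : (0 < q)%N -> (y < q ^ b)%N ->
  ((x * q ^ b + y) %/ q ^ b = x)%N /\ ((x * q ^ b + y) %% q ^ b = y)%N.
Proof.
move=> q0 hy; have qb : (0 < q ^ b)%N by rewrite expn_gt0 q0.
by rewrite divnMDl // divn_small // addn0 modnMDl modn_small.
Qed.

Lemma real_part (R : realType) (N r a : R) : 0 <= a -> a <= r -> 0 < N ->
  (Num.trunc (N * a) + Num.trunc (N * (r - a)))%:R > N * r - 2 /\
  (Num.trunc (N * a))%:R <= N * a /\ (Num.trunc (N * (r - a)))%:R <= N * (r - a).
Proof.
move=> a0 ar N0.
have h1 : 0 <= N * a by apply: mulr_ge0; lra.
have h2 : 0 <= N * (r - a) by apply: mulr_ge0; lra.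
move: (trunc_itv h1) (trunc_itv h2) => /andP[u1 v1] /andP[u2 v2].
rewrite natrD; move: v1 v2; rewrite -!natr1 => v1 v2.
split; last by [].
have -> : N * r = N * a + N * (r - a) by rewrite mulrBr; lra.
lra.
Qed.

Theorem theorem5 (R : realType) (q : nat) (hq : (1 < q)%N)
    (C1 C2 C3 C4 C5 C6 C7 R1 R2 : R)
    (hC1 : 0 <= C1) (hC2 : 0 <= C2) (hC3 : 0 <= C3) (hC4 : 0 <= C4)
    (hC5 : 0 <= C5) (hC6 : 0 <= C6) (hC7 : 0 <= C7)
    (hR1 : 0 <= R1) (hR2 : 0 <= R2)
    (h1 : R1 <= C1 + Num.min R1 C4)
    (h2 : R2 <= C2 + Num.min R2 C5)
    (h12 : R1 + R2 <= Num.min C3 (C6 + C7) + Num.min R2 C5 + Num.min R1 C4) :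
  butterfly_achievable q C1 C2 C3 C4 C5 (C6 + C7) R1 R2.
Proof.
move=> eps eps0.
have q0 : (0 < q)%N by apply: ltn_trans hq.
set a := Num.min R1 C4 in h1 h12 *.
set b := Num.min R2 C5 in h2 h12 *.
set c := Num.min C3 (C6 + C7) in h12.
have aR : a <= R1 by rewrite /a ge_min lexx.
have aC : a <= C4 by rewrite /a ge_min lexx orbT.
have a0 : 0 <= a by rewrite /a le_min hR1 hC4.
have bR : b <= R2 by rewrite /b ge_min lexx.
have bC : b <= C5 by rewrite /b ge_min lexx orbT.
have b0 : 0 <= b by rewrite /b le_min hR2 hC5.
have cC3 : c <= C3 by rewrite /c ge_min lexx.
have cC6 : c <= C6 + C7 by rewrite /c ge_min lexx orbT.
set n := (Num.trunc (2 / eps)).+1.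
exists n; split; first by [].
set N : R := n%:R.
have N0 : 0 < N by rewrite /N ltr0n.
have Ne : 2 < N * eps.
  rewrite -ltr_pdivrMr //; rewrite /N /n.
  have h : 0 <= 2 / eps by apply: divr_ge0; lra.
  by case/andP: (trunc_itv h).
have [r1 [s1 t1]] := @real_part R N R1 a a0 aR N0.
have [r2 [s2 t2]] := @real_part R N R2 b b0 bR N0.
set d1 := Num.trunc (N * a) in r1 s1 t1.
set p1 := Num.trunc (N * (R1 - a)) in r1 s1 t1.
set d2 := Num.trunc (N * b) in r2 s2 t2.
set p2 := Num.trunc (N * (R2 - b)) in r2 s2 t2.
have NaC : N * a <= N * C4 by rewrite ler_pM2l.
have NbC : N * b <= N * C5 by rewrite ler_pM2l.
have N1 : N * (R1 - a) <= N * C1 by rewrite ler_pM2l //; lra.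
have N2 : N * (R2 - b) <= N * C2 by rewrite ler_pM2l //; lra.
have N3 : N * (R1 - a) + N * (R2 - b) <= N * c by rewrite -mulrDr ler_pM2l //; lra.
have N3' : N * c <= N * C3 by rewrite ler_pM2l.
have N6 : N * c <= N * (C6 + C7) by rewrite ler_pM2l.
exists (p1 + d1)%N, (p2 + d2)%N, p1, p2, (p1 + p2)%N, d1, d2, (p1 + p2)%N.
split.
  rewrite addnC; split.
    have : N * (R1 - eps) = N * R1 - N * eps by rewrite mulrBr.
    lra.
  have : N * (R2 - eps) = N * R2 - N * eps by rewrite mulrBr.
  lra.
split.
  split; rewrite ?natrD; lra.
split; first by rewrite natrD; lra.
have e0 k : (0 < q ^ k)%N by rewrite expn_gt0 q0.
exists (fun w => @mk _ (e0 p1) (w %/ q ^ d1)), (fun w => @mk _ (e0 d1) w).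
exists (fun w => @mk _ (e0 p2) (w %/ q ^ d2)), (fun w => @mk _ (e0 d2) w).
exists (fun x y => @mk _ (e0 (p1 + p2)%N) (x * q ^ p2 + y)), id.
exists (fun u v z => (@mk _ (e0 (p1 + d1)%N) ((z %/ q ^ p2) * q ^ d1 + u),
                      @mk _ (e0 (p2 + d2)%N) ((z %% q ^ p2) * q ^ d2 + v))).
set S := finset _.
have -> : S = set0.
  apply/setP => -[w1 w2]; rewrite !inE /=; apply/negbTE; rewrite negbK.
  apply/eqP; congr pair; apply: val_inj => /=.
  - set x := ((w1 %/ q ^ d1) %% q ^ p1)%N; set y := ((w2 %/ q ^ d2) %% q ^ p2)%N.
    have hx : (x < q ^ p1)%N by rewrite ltn_pmod.
    have hy : (y < q ^ p2)%N by rewrite ltn_pmod.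
    rewrite (modn_small (@comb_lt _ _ _ _ _ hx hy)).
    have [-> _] := @comb_div _ _ x _ q0 hy.
    rewrite modn_small; first by rewrite /x split_ok.
    by rewrite /x split_ok.
  - set x := ((w1 %/ q ^ d1) %% q ^ p1)%N; set y := ((w2 %/ q ^ d2) %% q ^ p2)%N.
    have hx : (x < q ^ p1)%N by rewrite ltn_pmod.
    have hy : (y < q ^ p2)%N by rewrite ltn_pmod.
    rewrite (modn_small (@comb_lt _ _ _ _ _ hx hy)).
    have [_ ->] := @comb_div _ _ x _ q0 hy.
    rewrite modn_small; first by rewrite /y split_ok.
    by rewrite /y split_ok.
rewrite cards0 mulr_ge0 //; lra.
Qed.
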